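(* Let $A$ be a bounded linear operator on a complex Hilbert space $\mathcal{H}$. For $t \in [0,2\pi)$ put $A_t = e^{it}A$, $H_t = \frac{1}{2}(A_t + A_t^* )$, $J_t = \frac{1}{2i}(A_t - A_t^* )$, and \[ b_x(t) = \sup_{\|x\|=1}\langle H_t x, x\rangle - \inf_{\|x\|=1}\langle H_t x, x\rangle,\qquad b_y(t) = \sup_{\|x\|=1}\langle J_t x, x\rangle - \inf_{\|x\|=1}\langle J_t x, x\rangle . \] Then \[ \|A^*A - AA^*\| \le \min_{t \in [0,2\pi)} \{ b_x(t)\, b_y(t) \}. \]
   Context: $b_x(t)$ and $b_y(t)$ are the widths of the numerical range $W(e^{it}A)=\{\langle e^{it}Ax,x\rangle : \|x\|=1\}$ in the directions of the real and imaginary axes respectively. *)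

(* Defs.v *)
From HB Require Import structures.
From mathcomp Require Import all_boot all_order all_algebra.
From mathcomp Require Import classical_sets boolp reals trigo.
From mathcomp Require Import complex.
Set Implicit Arguments. Unset Strict Implicit. Unset Printing Implicit Defensive.
Import Order.TTheory GRing.Theory Num.Theory.
Local Open Scope ring_scope.
Local Open Scope classical_set_scope.

Section Hilbert.
Variables (R : realType) (V : lmodType R[i]) (ip : V -> V -> R[i]).

Definition hnorm (x : V) : R := Num.sqrt (complex.Re (ip x x)).

Record is_hilbert : Prop := IsHilbert {
  ip_linl : forall (a : R[i]) (x y z : V), ip (a *: x + y) z = a * ip x z + ip y z;
  ip_conj : forall x y : V, ip y x = (ip x y)^*;
  ip_ge0  : forall x : V, 0 <= ip x x;
  ip_def  : forall x : V, ip x x = 0 -> x = 0;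
  ip_complete : forall u : nat -> V,
    (forall e : R, 0 < e -> exists N : nat, forall m n : nat,
        (N <= m)%N -> (N <= n)%N -> hnorm (u m - u n) < e) ->
    exists l : V, forall e : R, 0 < e -> exists N : nat, forall n : nat,
        (N <= n)%N -> hnorm (u n - l) < e }.

Definition is_bounded_linear (A : V -> V) : Prop :=
  (forall (a : R[i]) (x y : V), A (a *: x + y) = a *: A x + A y) /\
  (exists M : R, forall x : V, hnorm (A x) <= M * hnorm x).

Definition is_adjoint (A As : V -> V) : Prop :=
  forall x y : V, ip (A x) y = ip x (As y).

Definition unit_sphere : set V := [set x | hnorm x = 1].

Definition opnorm (T : V -> V) : R := sup [set hnorm (T x) | x in unit_sphere].

Definition eit (t : R) : R[i] := Complex (cos t) (sin t).
Definition imag_unit : R[i] := Complex 0 1.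

Definition At (A : V -> V) (t : R) (x : V) : V := eit t *: A x.
Definition Ats (As : V -> V) (t : R) (x : V) : V := (eit t)^* *: As x.
Definition Ht (A As : V -> V) (t : R) (x : V) : V :=
  (2%:R)^-1 *: (At A t x + Ats As t x).
Definition Jt (A As : V -> V) (t : R) (x : V) : V :=
  (2%:R * imag_unit)^-1 *: (At A t x - Ats As t x).

(* width of {<T x, x> : ||x|| = 1} for a self-adjoint T (values are real) *)
Definition width (T : V -> V) : R :=
  sup [set complex.Re (ip (T x) x) | x in unit_sphere]
  - inf [set complex.Re (ip (T x) x) | x in unit_sphere].

Definition b_x (A As : V -> V) (t : R) : R := width (Ht A As t).
Definition b_y (A As : V -> V) (t : R) : R := width (Jt A As t).

End Hilbert.

(* Main.v *)
Require Import Defs.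
From HB Require Import structures.
From mathcomp Require Import all_boot all_order all_algebra.
From mathcomp Require Import classical_sets boolp reals trigo.
From mathcomp Require Import complex.
From mathcomp Require Import ring lra.
Import Order.TTheory GRing.Theory Num.Theory.
Local Open Scope ring_scope.
Local Open Scope complex_scope.

Ltac cplx := apply/eqP; rewrite eq_complex /=; apply/andP; split; apply/eqP; ring.



Lemma conjN (R : realType) (x : R[i]) : Num.conj (- x) = - Num.conj x.
Proof. case: x => a b; cplx. Qed.

Lemma cnat (R : realType) n : Num.conj (n%:R : R[i]) = n%:R.
Proof. exact: conjc_nat. Qed.
Lemma cinv (R : realType) (x : R[i]) : Num.conj (x^-1) = (Num.conj x)^-1.
Proof. exact: conjc_inv. Qed.
Lemma cI (R : realType) : Num.conj (imag_unit R) = - imag_unit R.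
Proof. rewrite /imag_unit. cplx. Qed.
Lemma II (R : realType) : imag_unit R * imag_unit R = -1.
Proof. rewrite /imag_unit. cplx. Qed.
Lemma cnat2 (R : realType) n : (n%:R : R)%:C = n%:R :> R[i].
Proof. exact: rmorph_nat. Qed.
Lemma eitc (R : realType) t : (eit t : R[i]) * Num.conj (eit t) = 1.
Proof. rewrite /eit. apply/eqP; rewrite eq_complex /=; apply/andP; split; apply/eqP.
  have := cos2Dsin2 t. rewrite !expr2. move=> h. rewrite -h. ring. ring. Qed.

Lemma two_neq0 (R : realType) : (2%:R : R[i]) != 0.
Proof. rewrite -cnat2; apply/negP => /eqP [h]; by move/eqP: h; rewrite pnatr_eq0. Qed.

Lemma I_neq0 (R : realType) : imag_unit R != 0.
Proof. apply/negP => /eqP [h]; by move/eqP: h; rewrite oner_eq0. Qed.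


Section Basics.
Variables (R : realType) (V : lmodType R[i]) (ip : V -> V -> R[i]).
Hypothesis hH : is_hilbert ip.

Lemma ip0l z : ip 0 z = 0.
Proof.
have := ip_linl hH 1 0 0 z; rewrite scaler0 addr0 mul1r => /eqP.
by rewrite -subr_eq0 opprD addrA subrr add0r oppr_eq0 => /eqP.
Qed.

Lemma ipDl x y z : ip (x + y) z = ip x z + ip y z.
Proof. by have := ip_linl hH 1 x y z; rewrite scale1r mul1r. Qed.

Lemma ipZl a x z : ip (a *: x) z = a * ip x z.
Proof. by have := ip_linl hH a x 0 z; rewrite addr0 ip0l addr0. Qed.

Lemma ipNl x z : ip (- x) z = - ip x z.
Proof. by rewrite -scaleN1r ipZl mulN1r. Qed.

Lemma ipBl x y z : ip (x - y) z = ip x z - ip y z.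
Proof. by rewrite ipDl ipNl. Qed.

Lemma conjD (a b : R[i]) : Num.conj (a + b) = Num.conj a + Num.conj b.
Proof. by case: a => a1 a2; case: b => b1 b2 /=; apply/eqP; rewrite eq_complex /= opprD !eqxx. Qed.

Lemma conjM (a b : R[i]) : Num.conj (a * b) = Num.conj a * Num.conj b.
Proof. case: a => a1 a2; case: b => b1 b2 /=; apply/eqP; rewrite eq_complex /=.
apply/andP; split; apply/eqP; ring. Qed.

Lemma conjK (a : R[i]) : Num.conj (Num.conj a) = a.
Proof. by case: a => a1 a2; apply/eqP; rewrite eq_complex /= opprK !eqxx. Qed.

Lemma ipDr x y z : ip z (x + y) = ip z x + ip z y.
Proof. by rewrite (ip_conj hH) ipDl conjD -!(ip_conj hH). Qed.

Lemma ipZr a x z : ip z (a *: x) = Num.conj a * ip z x.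
Proof. by rewrite (ip_conj hH) ipZl conjM -!(ip_conj hH). Qed.

Lemma ipNr x z : ip z (- x) = - ip z x.
Proof.
have c : Num.conj (-1 : R[i]) = -1 by cplx.
by rewrite -scaleN1r ipZr c mulN1r. Qed.

Lemma ipBr x y z : ip z (x - y) = ip z x - ip z y.
Proof. by rewrite ipDr ipNr. Qed.

Lemma ip0r z : ip z 0 = 0.
Proof. by rewrite -(subrr z) ipBr subrr. Qed.

Lemma ipIm x : complex.Im (ip x x) = 0.
Proof. by have := ip_ge0 hH x; rewrite lecE => /andP[/eqP h _]; exact: h. Qed.

Lemma ipRe x : ip x x = (complex.Re (ip x x))%:C.
Proof. by have := ipIm x; case: (ip x x) => a b /= ->. Qed.

Lemma N_ge0 x : 0 <= complex.Re (ip x x).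
Proof. by have := ip_ge0 hH x; rewrite lecE => /andP[_]. Qed.

Lemma N_eq0 x : complex.Re (ip x x) = 0 -> x = 0.
Proof. by move=> h; apply: (ip_def hH); rewrite ipRe h. Qed.

Lemma ext_l X Y : (forall z, ip X z = ip Y z) -> X = Y.
Proof.
move=> h; apply/eqP; rewrite -subr_eq0; apply/eqP; apply: (ip_def hH).
by rewrite ipBl h subrr.
Qed.

Lemma ext_r X Y : (forall z, ip z X = ip z Y) -> X = Y.
Proof.
move=> h; apply/eqP; rewrite -subr_eq0; apply/eqP; apply: (ip_def hH).
by rewrite ipBr h subrr.
Qed.

Lemma ReD (a b : R[i]) : complex.Re (a + b) = complex.Re a + complex.Re b.
Proof. by case: a; case: b. Qed.
Lemma ReN (a : R[i]) : complex.Re (- a) = - complex.Re a.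
Proof. by case: a. Qed.
Lemma ReB (a b : R[i]) : complex.Re (a - b) = complex.Re a - complex.Re b.
Proof. by rewrite ReD ReN. Qed.
Lemma ReM (k : R) (a : R[i]) : complex.Re (k%:C * a) = k * complex.Re a.
Proof. by case: a => a1 a2 /=; ring. Qed.
Lemma Reconj (a : R[i]) : complex.Re (Num.conj a) = complex.Re a.
Proof. by case: a. Qed.
Lemma conjR (k : R) : Num.conj (k%:C) = k%:C.
Proof. by cplx. Qed.

Definition N x := complex.Re (ip x x).

Lemma CS2 u v : complex.Re (ip u v) ^+ 2 <= N u * N v.
Proof.
rewrite /N.
have key : forall a b : R, 0 <= a ^+ 2 * N u + 2%:R * a * b * complex.Re (ip u v) + b ^+ 2 * N v.
  move=> a b; have := N_ge0 (a%:C *: u + b%:C *: v).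
  rewrite !ipDl !ipDr !ipZl !ipZr !conjR !ReD !ReM.
  rewrite [complex.Re (ip v u)](_ : _ = complex.Re (ip u v)); last by rewrite (ip_conj hH) Reconj.
  rewrite /N.
  by move=> h; nra.
have := N_ge0 v; rewrite le_eqVlt => /orP[/eqP h0|hp].
  have v0 := @N_eq0 v (esym h0); rewrite v0 ip0r ip0l /=.
  by rewrite expr0n /= mulr0.
have := key (complex.Re (ip v v)) (- complex.Re (ip u v)).
set r := complex.Re (ip u v); set nu := complex.Re (ip u u); set nv := complex.Re (ip v v) => h.
have h2 : 0 <= nv * (nu * nv - r ^+ 2) by nra.
by rewrite pmulr_rge0 // subr_ge0 in h2.
Qed.

Lemma CS u v : complex.Re (ip u v) <= hnorm ip u * hnorm ip v.
Proof.
rewrite /hnorm -sqrtrM ?N_ge0 //.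
apply: le_trans (ler_norm _) _.
rewrite -sqrtr_sqr; apply: ler_wsqrtr; exact: CS2.
Qed.

Lemma NZR (k : R) z : N (k%:C *: z) = k ^+ 2 * N z.
Proof. by rewrite /N ipZl ipZr conjR !ReM mulrA -expr2. Qed.

Lemma NZ (c : R[i]) (k : R) z : c * Num.conj c = k%:C -> N (c *: z) = k * N z.
Proof. by move=> h; rewrite /N ipZl ipZr mulrA h ReM. Qed.

Lemma hnormE z : hnorm ip z = Num.sqrt (N z).
Proof. by []. Qed.

Lemma ReC u v : complex.Re (ip v u) = complex.Re (ip u v).
Proof. by rewrite (ip_conj hH) Reconj. Qed.

Lemma sa_bound (P : V -> V) (p : R) : 0 <= p ->
  (forall (c : R[i]) u w, P (c *: u + w) = c *: P u + P w) ->
  (forall u v, ip (P u) v = ip u (P v)) ->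
  (forall z, N z = 1 -> `|complex.Re (ip (P z) z)| <= p) ->
  forall z, N (P z) <= p ^+ 2 * N z.
Proof.
move=> p0 Plin Psa Pb.
have P0 : P 0 = 0.
  have := Plin 1 0 0; rewrite scaler0 addr0 scale1r => /eqP.
  by rewrite -subr_eq0 opprD addrA subrr add0r oppr_eq0 => /eqP.
  have PD u w : P (u + w) = P u + P w by have := Plin 1 u w; rewrite !scale1r.
have PZ c u : P (c *: u) = c *: P u by rewrite -[c *: u]addr0 Plin P0 addr0.
have PN u : P (- u) = - P u by rewrite -scaleN1r PZ scaleN1r.
have stepa : forall z, `|complex.Re (ip (P z) z)| <= p * N z.
  move=> z; have := N_ge0 z; rewrite le_eqVlt => /orP[/eqP h0|hp].
    by rewrite (@N_eq0 z (esym h0)) P0 ip0l /= normr0 /N ip0l /= mulr0.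
  set s := (Num.sqrt (N z))^-1.
  have hs : s ^+ 2 * N z = 1.
    by rewrite /s exprVn sqr_sqrtr ?N_ge0 // mulVf // gt_eqF.
  have := Pb _ (etrans (NZR s z) hs).
  rewrite PZ ipZl ipZr conjR mulrA -rmorphM ReM normrM.
  have s2 : 0 < s ^+ 2 by move: hs; rewrite -[s ^+ 2]mulr1; nra.
  rewrite [`|s ^+ 2|]ger0_norm; last exact: ltW.
  move=> h.
  by have := ler_wpM2r (N_ge0 z) h; rewrite mulrAC hs mul1r.
have stepb : forall u v, 4%:R * complex.Re (ip (P u) v) <= 2%:R * p * (N u + N v).
  move=> u v.
  have h1 := stepa (u + v); have h2 := stepa (u - v).
  move: h1 h2; rewrite !PD !PN /N !ipDl !ipDr !ipNl !ipNr !ReD !ReN.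
  rewrite (Psa v u) (ReC (P u) v) (ReC u v).
  set a := complex.Re (ip (P u) v); set b := complex.Re (ip (P u) u).
  set c := complex.Re (ip (P v) v); set d := complex.Re (ip u v).
  set nu := complex.Re (ip u u); set nv := complex.Re (ip v v).
  move=> h1 h2.
  have := ler_norm (b + a + (a + c)); have := ler_norm (- (b - a + (- a - - c))).
  rewrite normrN => h3 h4. move: h1 h2 h3 h4; rewrite !mulrDr !mulrN !opprK; lra.
move=> z; have := N_ge0 (P z) => hP.
have := p0; rewrite le_eqVlt => /orP[/eqP pe|pp].
  have := stepb z (P z); rewrite -pe mulr0 mul0r expr0n /= mul0r -/(N (P z)) => h.
  lra.
have := stepb (p%:C *: z) (P z); rewrite PZ ipZl ReM NZR -/(N (P z)) => h.
have h' : p * N (P z) <= p * (p ^+ 2 * N z).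
  move: h; have -> : 2%:R * p * (p ^+ 2 * N z + N (P z)) = 2%:R * (p * (p ^+ 2 * N z)) + 2%:R * (p * N (P z)) by ring.
  set X := p * N (P z); set Y := p * (p ^+ 2 * N z); clearbody X Y => hh; lra.
by rewrite -(ler_pM2l pp).
Qed.

Let I := imag_unit R.
Let hc : R[i] := (2%:R)^-1.
Let jc : R[i] := (2%:R * I)^-1.

Lemma hc2 : hc * 2%:R = 1. Proof. by rewrite /hc mulVf // two_neq0. Qed.
Lemma jcE : jc = - I * hc.
Proof.
rewrite /jc invfM mulrC; congr (_ * _).
have nz := I_neq0 R.
apply: (mulfI nz); rewrite mulfV // -/I mulrN II opprK //.
Qed.
Lemma hcE : hc = (2^-1 : R)%:C.
Proof. by rewrite /hc -cnat2 fmorphV. Qed.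
Lemma chc : Num.conj hc = hc. Proof. by rewrite /hc cinv cnat. Qed.
Lemma cjc : Num.conj jc = - jc.
Proof. rewrite jcE !conjM chc conjN cI -/I; ring. Qed.


Lemma hnorm_le (T : V -> V) (p : R) z : 0 <= p -> N (T z) <= p ^+ 2 * N z ->
  hnorm ip (T z) <= p * hnorm ip z.
Proof.
move=> p0 h; rewrite !hnormE.
apply: le_trans (ler_wsqrtr h) _.
by rewrite sqrtrM ?sqrtr_sqr ?ger0_norm // sqr_ge0.
Qed.

Lemma hnorm_ge0 z : 0 <= hnorm ip z.
Proof. exact: sqrtr_ge0. Qed.

Lemma hnorm2I (c : R[i]) u : c * Num.conj c = (4%:R : R)%:C ->
  hnorm ip (c *: u) = 2%:R * hnorm ip u.
Proof.
move=> h; rewrite !hnormE (NZ c _ u h) sqrtrM ?ler0n //.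
have -> : (4%:R : R) = 2%:R ^+ 2 by rewrite expr2 -natrM.
by rewrite sqrtr_sqr ger0_norm ?ler0n.
Qed.

Lemma core (B Bs : V -> V) (a b p q : R) :
  (forall c u w, B (c *: u + w) = c *: B u + B w) ->
  (forall c u w, Bs (c *: u + w) = c *: Bs u + Bs w) ->
  (forall u v, ip (B u) v = ip u (Bs v)) ->
  0 <= p -> 0 <= q ->
  (forall z, N z = 1 -> `|complex.Re (ip (hc *: (B z + Bs z)) z) - a| <= p) ->
  (forall z, N z = 1 -> `|complex.Re (ip (jc *: (B z - Bs z)) z) - b| <= q) ->
  forall x y, complex.Re (ip (B x) (B y) - ip (Bs x) (Bs y))
     <= 4%:R * p * q * (hnorm ip x * hnorm ip y).
Proof.
move=> Bl Bsl adj p0 q0 bH bJ x y.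
have adj2 u v : ip (Bs u) v = ip u (B v) by rewrite (ip_conj hH) -adj -(ip_conj hH).
pose P := fun z => hc *: (B z + Bs z) - a%:C *: z.
pose Q := fun z => jc *: (B z - Bs z) - b%:C *: z.
have Plin : forall c u w, P (c *: u + w) = c *: P u + P w.
  move=> c u w; apply: ext_l => z; rewrite /P Bl Bsl.
  rewrite !(ipDl, ipBl, ipNl, ipZl); ring.
have Qlin : forall c u w, Q (c *: u + w) = c *: Q u + Q w.
  move=> c u w; apply: ext_l => z; rewrite /Q Bl Bsl.
  rewrite !(ipDl, ipBl, ipNl, ipZl); ring.
have Psa : forall u v, ip (P u) v = ip u (P v).
  move=> u v; rewrite /P !(ipDl, ipBl, ipNl, ipZl, ipDr, ipBr, ipNr, ipZr) adj adj2 chc conjR; ring.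
have Qsa : forall u v, ip (Q u) v = ip u (Q v).
  move=> u v; rewrite /Q !(ipDl, ipBl, ipNl, ipZl, ipDr, ipBr, ipNr, ipZr) adj adj2 cjc conjR; ring.
have Pb : forall z, N z = 1 -> `|complex.Re (ip (P z) z)| <= p.
  by move=> z hz; rewrite /P ipBl (ipZl a%:C) ReB ReM -/(N z) hz mulr1; apply: bH.
have Qb : forall z, N z = 1 -> `|complex.Re (ip (Q z) z)| <= q.
  by move=> z hz; rewrite /Q ipBl (ipZl b%:C) ReB ReM -/(N z) hz mulr1; apply: bJ.
have hP z : hnorm ip (P z) <= p * hnorm ip z by apply: hnorm_le => //; exact: sa_bound.
have hQ z : hnorm ip (Q z) <= q * hnorm ip z by apply: hnorm_le => //; exact: sa_bound.
have ident : ip (B x) (B y) - ip (Bs x) (Bs y) =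
    ip ((2%:R * I) *: Q x) (P y) + ip ((- (2%:R * I)) *: P x) (Q y).
  rewrite /P /Q !(ipDl, ipBl, ipNl, ipZl, ipDr, ipBr, ipNr, ipZr) !adj !adj2 chc cjc !conjR.
  rewrite jcE; have h2 := hc2; have hI := II R; rewrite -/I in hI.
  rewrite hcE /I /imag_unit -cnat2.
  generalize (ip x (Bs (B y))) (ip x (B (Bs y))) (ip x (Bs (Bs y))) (ip x (B (B y)))
    (ip x (B y)) (ip x (Bs y)) (ip x y).
  move=> [z1 w1] [z2 w2] [z3 w3] [z4 w4] [z5 w5] [z6 w6] [z7 w7].
  apply/eqP; rewrite eq_complex /=; apply/andP; split; apply/eqP; field; done.
rewrite ident ReD.
have hI := II R; rewrite -/I in hI.
have c4 : (2%:R * I) * Num.conj (2%:R * I) = (4%:R : R)%:C.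
  by rewrite conjM cnat cI cnat2 /I; have := II R; generalize (imag_unit R) => i hi; ring: hi.
have c4' : (- (2%:R * I)) * Num.conj (- (2%:R * I)) = (4%:R : R)%:C.
  by rewrite conjN conjM cnat cI cnat2 /I; have := II R; generalize (imag_unit R) => i hi; ring: hi.
have h1 := CS ((2%:R * I) *: Q x) (P y).
have h2 := CS ((- (2%:R * I)) *: P x) (Q y).
rewrite (hnorm2I _ _ c4) in h1; rewrite (hnorm2I _ _ c4') in h2.
have e1 : hnorm ip (Q x) * hnorm ip (P y) <= (q * hnorm ip x) * (p * hnorm ip y).
  by apply: ler_pM; rewrite ?hnorm_ge0.
have e2 : hnorm ip (P x) * hnorm ip (Q y) <= (p * hnorm ip x) * (q * hnorm ip y).
  by apply: ler_pM; rewrite ?hnorm_ge0.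
move: h1 h2 e1 e2; rewrite -!mulrA.
set u1 := hnorm ip (Q x) * hnorm ip (P y); set u2 := hnorm ip (P x) * hnorm ip (Q y).
have -> : q * (hnorm ip x * (p * hnorm ip y)) = p * (q * (hnorm ip x * hnorm ip y)) by ring.
have -> : p * (hnorm ip x * (q * hnorm ip y)) = p * (q * (hnorm ip x * hnorm ip y)) by ring.
set w := p * (q * (hnorm ip x * hnorm ip y)).
move=> h1 h2 e1 e2.
lra.
Qed.

Lemma unitN x : hnorm ip x = 1 <-> N x = 1.
Proof.
rewrite hnormE; split => h; last by rewrite h sqrtr1.
by rewrite /N -(sqr_sqrtr (N_ge0 x)) -/(N x) h expr1n.
Qed.

Lemma hnormU (c : R[i]) u : c * Num.conj c = 1 -> hnorm ip (c *: u) = hnorm ip u.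
Proof.
move=> h; rewrite !hnormE (NZ c 1 u) ?mul1r // h.
Qed.

Lemma main_lemma (A As : V -> V) : is_bounded_linear ip A -> is_adjoint ip A As ->
  forall t : R, opnorm ip (fun x => As (A x) - A (As x)) <= b_x ip A As t * b_y ip A As t.
Proof.
move=> [Al [M hM]] hAs t.
have Asl : forall c u w, As (c *: u + w) = c *: As u + As w.
  move=> c u w; apply: ext_r => z.
  by rewrite -hAs !(ipDr, ipZr) -!hAs.
have hAs2 u v : ip (As u) v = ip u (A v).
  by rewrite (ip_conj hH) -hAs -(ip_conj hH).
pose e := eit t.
have ee : e * Num.conj e = 1 by exact: eitc.
pose B := At A t; pose Bs := Ats As t.
have Bl : forall c u w, B (c *: u + w) = c *: B u + B w.
  move=> c u w; apply: ext_l => z; rewrite /B /At Al.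
  rewrite !(ipDl, ipZl); ring.
have Bsl : forall c u w, Bs (c *: u + w) = c *: Bs u + Bs w.
  move=> c u w; apply: ext_l => z; rewrite /Bs /Ats Asl.
  rewrite !(ipDl, ipZl); ring.
have adj : forall u v, ip (B u) v = ip u (Bs v).
  by move=> u v; rewrite /B /Bs /At /Ats ipZl ipZr conjK hAs.
have Cid : forall x y, ip (As (A x) - A (As x)) y = ip (B x) (B y) - ip (Bs x) (Bs y).
  move=> x y; rewrite /B /Bs /At /Ats !(ipBl, ipZl, ipZr) hAs2 hAs conjK.
  rewrite !mulrA ee [Num.conj e * e]mulrC ee !mul1r.
  by rewrite hAs.
have bnd : forall c z, c * Num.conj c = 1 -> hnorm ip z = 1 ->
    `|complex.Re (ip (c *: A z) z)| <= M.
  move=> c z hcc hz; rewrite ler_norml; apply/andP; split.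
    have := CS ((- c) *: A z) z; rewrite ipZl mulNr ReN -ipZl hnormU ?hz ?mulr1.
      move=> h; rewrite lerNl; apply: le_trans h _; have := hM z; by rewrite hz mulr1.
    by rewrite conjN mulrNN.
  have := CS (c *: A z) z; rewrite hnormU // hz mulr1 => h.
  apply: le_trans h _; have := hM z; by rewrite hz mulr1.
pose d : R[i] := Complex (sin t) (- cos t).
have dd : d * Num.conj d = 1.
  rewrite /d; apply/eqP; rewrite eq_complex /=; apply/andP; split; apply/eqP.
    have := cos2Dsin2 t; rewrite !expr2 => h; rewrite -h; ring.
  ring.
have fH : forall z, complex.Re (ip (Ht A As t z) z) = complex.Re (ip (e *: A z) z).
  move=> z; rewrite /Ht /At /Ats !(ipDl, ipZl) hAs2 (ip_conj hH z (A z)).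
  rewrite -(cnat2 R 2) -fmorphV -/e.
  generalize (ip z (A z)) => -[k1 k2]; rewrite /e /eit /=; field; done.
have fJ : forall z, complex.Re (ip (Jt A As t z) z) = complex.Re (ip (d *: A z) z).
  move=> z; rewrite /Jt /At /Ats !(ipDl, ipBl, ipNl, ipZl) hAs2 (ip_conj hH z (A z)).
  have -> : (2%:R * imag_unit R)^-1 = Complex 0 (- 2^-1) :> R[i].
    apply: (mulfI (mulf_neq0 (two_neq0 R) (I_neq0 R))).
    rewrite mulfV ?(mulf_neq0 (two_neq0 R) (I_neq0 R)) // -cnat2 /imag_unit.
    apply/eqP; rewrite eq_complex /=; apply/andP; split; apply/eqP; field; done.
  generalize (ip z (A z)) => -[k1 k2]; rewrite /d /e /eit /=; field; done.
pose SH := [set complex.Re (ip (Ht A As t x) x) | x in unit_sphere ip]%classic.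
pose SJ := [set complex.Re (ip (Jt A As t x) x) | x in unit_sphere ip]%classic.
pose SC := [set hnorm ip (As (A x) - A (As x)) | x in unit_sphere ip]%classic.
have -> : opnorm ip (fun x => As (A x) - A (As x)) = sup SC by [].
have -> : b_x ip A As t = sup SH - inf SH by [].
have -> : b_y ip A As t = sup SJ - inf SJ by [].
have [[x0 hx0]|emp] := pselect (exists x, unit_sphere ip x); last first.
  have E (f : V -> R) : [set f x | x in unit_sphere ip]%classic = set0.
    apply/seteqP; split => y; last by [].
    by case=> x hx _; apply: emp; exists x.
  by rewrite /SH /SJ /SC /inf !E !image_set0 sup0 oppr0 subrr mulr0.
have ubH : ubound SH M.
  move=> r [z hz <-]; rewrite fH; have := bnd e z ee hz; by rewrite ler_norml => /andP[].
have lbH : lbound SH (- M).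
  move=> r [z hz <-]; rewrite fH; have := bnd e z ee hz; by rewrite ler_norml => /andP[].
have ubJ : ubound SJ M.
  move=> r [z hz <-]; rewrite fJ; have := bnd d z dd hz; by rewrite ler_norml => /andP[].
have lbJ : lbound SJ (- M).
  move=> r [z hz <-]; rewrite fJ; have := bnd d z dd hz; by rewrite ler_norml => /andP[].
have inH : forall z, N z = 1 ->
    inf SH <= complex.Re (ip (hc *: (B z + Bs z)) z) <= sup SH.
  move=> z /unitN hz; apply/andP; split.
    by apply: (ge_inf (ex_intro _ _ lbH)); exists z.
  by apply: (ub_le_sup (ex_intro _ _ ubH)); exists z.
have inJ : forall z, N z = 1 ->
    inf SJ <= complex.Re (ip (jc *: (B z - Bs z)) z) <= sup SJ.
  move=> z /unitN hz; apply/andP; split.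
    by apply: (ge_inf (ex_intro _ _ lbJ)); exists z.
  by apply: (ub_le_sup (ex_intro _ _ ubJ)); exists z.
have hx0' := proj1 (unitN x0) hx0.
have pH0 : 0 <= (sup SH - inf SH) / 2%:R.
  by have := inH x0 hx0'; move=> /andP[h1 h2]; apply: divr_ge0; lra.
have pJ0 : 0 <= (sup SJ - inf SJ) / 2%:R.
  by have := inJ x0 hx0'; move=> /andP[h1 h2]; apply: divr_ge0; lra.
have bH : forall z, N z = 1 -> `|complex.Re (ip (hc *: (B z + Bs z)) z) - (sup SH + inf SH) / 2%:R|
   <= (sup SH - inf SH) / 2%:R.
  move=> z hz; have /andP[h1 h2] := inH z hz; rewrite ler_norml; apply/andP; split; lra.
have bJ : forall z, N z = 1 -> `|complex.Re (ip (jc *: (B z - Bs z)) z) - (sup SJ + inf SJ) / 2%:R|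
   <= (sup SJ - inf SJ) / 2%:R.
  move=> z hz; have /andP[h1 h2] := inJ z hz; rewrite ler_norml; apply/andP; split; lra.
have key := @core B Bs _ _ _ _ Bl Bsl adj pH0 pJ0 bH bJ.
have W0 : 0 <= (sup SH - inf SH) * (sup SJ - inf SJ).
  by apply: mulr_ge0; [have := inH x0 hx0' | have := inJ x0 hx0']; move=> /andP[h1 h2]; lra.
apply: ge_sup; first by exists (hnorm ip (As (A x0) - A (As x0))), x0.
move=> r [x hx <-].
set C := As (A x) - A (As x).
have := key x C; rewrite -Cid hx mul1r.
have -> : 4%:R * ((sup SH - inf SH) / 2%:R) * ((sup SJ - inf SJ) / 2%:R)
   = (sup SH - inf SH) * (sup SJ - inf SJ) by field.
set W := (sup SH - inf SH) * (sup SJ - inf SJ).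
have sC : complex.Re (ip C C) = hnorm ip C ^+ 2 by rewrite hnormE sqr_sqrtr ?N_ge0.
rewrite sC; have := hnorm_ge0 C; set s := hnorm ip C => s0 h.
move: W0; rewrite -/W => W0; nra.
Qed.

End Basics.

Theorem proposition3 (R : realType) (V : lmodType R[i]) (ip : V -> V -> R[i])
  (hH : is_hilbert ip) (A As : V -> V)
  (hA : is_bounded_linear ip A) (hAs : is_adjoint ip A As) :
  forall t : R, 0 <= t < 2%:R * pi ->
    opnorm ip (fun x => As (A x) - A (As x)) <= b_x ip A As t * b_y ip A As t.
Proof.
move=> t _; exact: (@main_lemma _ _ _ hH _ _ hA hAs t).
Qed.
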